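(* For every $0<\delta<0.5$, every $\epsilon>0$ and every $\epsilon'>0$ there exist a domain of databases and a Bayesian inference problem (a prior and a likelihood) on it such that: (i) the mechanism that outputs a single sample from the posterior distribution $p(\theta\mid D)$ is $(\epsilon,\delta)$-differentially private; but (ii) when performing approximate sampling by running SGLD on the database, there is a number of steps $T$ such that the mechanism that outputs the SGLD iterate after $T$ iterations is not $(\epsilon'',\delta)$-differentially private for any $\epsilon''<\epsilon'$.
   Context: A randomized algorithm $M$ mapping databases to outputs is $(\epsilon,\delta)$-differentially private if for all measurable sets $S$ of outputs and all neighboring databases $D,\hat D$ (databases differing in a single record, i.e. at Hamming distance at most 1), $\Pr[M(D)\in S]\le e^{\epsilon}\Pr[M(\hat D)\in S]+\delta$. Stochastic Gradient Langevin Dynamics (SGLD) for a prior $p(\theta)$, likelihood $p(y\mid\theta)$ and database $\{y_1,\dots,y_n\}$ with batch size $b$ and step sizes $\eta_j$ starts from an initial $\theta_0$ and iterates $\theta_{j+1}=\theta_j+\frac{\eta_j}{2}\big[\nabla_\theta\ln p(\theta_j)+\frac{n}{b}\sum_{i\in B_j}\nabla_\theta\ln p(y_i\mid\theta_j)\big]+\sqrt{\eta_j}\,\xi_j$, with $\xi_j\sim\mathcal N(0,1)$ independent. The variant considered is cyclic SGLD: the database is randomly shuffled once and the samples (batch size 1) are then used cyclically in that order. *)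

(* Defs.v *)
From HB Require Import structures.
From mathcomp Require Import all_boot all_order all_algebra.
From mathcomp Require Import fingroup perm.
From mathcomp Require Import all_classical all_reals all_analysis.
Set Implicit Arguments. Unset Strict Implicit. Unset Printing Implicit Defensive.
Import Order.TTheory GRing.Theory Num.Theory.
Import numFieldNormedType.Exports.
Local Open Scope classical_set_scope.
Local Open Scope ring_scope.

Section SGLD_defs.
Context {R : realType}.

(* Databases of size n.+1 over a record type Y: functions 'I_n.+1 -> Y.
   Neighbouring = Hamming distance at most 1. *)
Definition neighbors (Y : Type) (n : nat) (D D' : 'I_n.+1 -> Y) : Prop :=
  exists i : 'I_n.+1, forall j, j != i -> D j = D' j.

(* A mechanism is given by its output law: M D S = Pr[M(D) \in S]. *)
Definition dp (Y : Type) (n : nat) (M : ('I_n.+1 -> Y) -> set R -> R)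
  (eps delta : R) : Prop :=
  forall D D' : 'I_n.+1 -> Y, neighbors D D' ->
  forall S : set R, measurable S -> M D S <= expR eps * M D' S + delta.

Definition post_dens (Y : Type) (n : nat) (p : R -> R) (l : Y -> R -> R)
  (D : 'I_n.+1 -> Y) (t : R) : R :=
  p t * \prod_(i < n.+1) l (D i) t.

Definition posterior_prob (Y : Type) (n : nat) (p : R -> R) (l : Y -> R -> R)
  (D : 'I_n.+1 -> Y) (S : set R) : R :=
  fine (\int[lebesgue_measure]_(x in S) (post_dens p l D x)%:E)%E /
  fine (\int[lebesgue_measure]_x (post_dens p l D x)%:E)%E.

Definition bayes_problem (Y : Type) (n : nat) (p : R -> R) (l : Y -> R -> R)
  : Prop :=
  ((forall t, 0 < p t) /\ (forall y t, 0 < l y t)) /\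
  [/\
      (forall t, derivable (fun x => ln (p x)) t 1) /\
        continuous (derive1 (fun x => ln (p x))),
      (forall y, (forall t, derivable (fun x => ln (l y x)) t 1) /\
        continuous (derive1 (fun x => ln (l y x)))),
      (\int[lebesgue_measure]_x (p x)%:E = 1)%E &
      forall D : 'I_n.+1 -> Y,
        (0 < \int[lebesgue_measure]_x (post_dens p l D x)%:E)%E /\
        (\int[lebesgue_measure]_x (post_dens p l D x)%:E < +oo)%E].

(* One SGLD mean update with batch size 1 (so n/b = n.+1, the database
   size) on the record y, with step size e:
   theta + e/2 * (d/dtheta ln p(theta) + N * d/dtheta ln p(y|theta)). *)
Definition sgld_drift (Y : Type) (n : nat) (p : R -> R) (l : Y -> R -> R)
  (e : R) (y : Y) (t : R) : R :=
  t + e / 2 * (derive1 (fun x => ln (p x)) t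
               + n.+1%:R * derive1 (fun x => ln (l y x)) t).

(* Cyclic SGLD with fixed shuffle s: the record used at step j is
   D (s (j mod N)).  sgld_reach k j t S = probability that, starting at
   step index j from theta_j = t, after k more SGLD steps the iterate lies
   in S; theta_{j+1} ~ N(drift_j(theta_j), eta_j) (std dev sqrt eta_j). *)
Fixpoint sgld_reach (Y : Type) (n : nat) (p : R -> R) (l : Y -> R -> R)
  (eta : nat -> R) (D : 'I_n.+1 -> Y) (s : 'S_n.+1) (S : set R)
  (k j : nat) (t : R) : \bar R :=
  match k with
  | 0 => (\1_S t)%:E
  | k'.+1 =>
      (\int[normal_prob
              (@sgld_drift Y n p l (eta j) (D (s (inord (j %% n.+1)))) t)
              (Num.sqrt (eta j))]_x
         @sgld_reach Y n p l eta D s S k' j.+1 x)%E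
  end.

(* Pr[theta_T \in S] for cyclic SGLD started at theta0, the shuffle being
   uniformly random over the (n.+1)! permutations. *)
Definition sgld_prob (Y : Type) (n : nat) (p : R -> R) (l : Y -> R -> R)
  (eta : nat -> R) (theta0 : R) (T : nat)
  (D : 'I_n.+1 -> Y) (S : set R) : R :=
  fine (\sum_(s : 'S_n.+1) sgld_reach p l eta D s S T 0 theta0)%E
  / (n.+1)`!%:R.

End SGLD_defs.

(* Main.v *)
Require Import Defs.
From HB Require Import structures.
From mathcomp Require Import all_boot all_order all_algebra.
From mathcomp Require Import fingroup perm.
From mathcomp Require Import all_classical all_reals all_analysis.
From mathcomp Require Import ring lra measurable_realfun normal_distribution.
Import Order.TTheory GRing.Theory Num.Theory.
Import numFieldNormedType.Exports.
Local Open Scope classical_set_scope.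
Local Open Scope ring_scope.

Section S.
Context {R : realType}.

Definition pp (t : R) := normal_pdf 0 1 t.

Lemma ppE t : pp t = normal_peak (1:R) * expR (- t ^+ 2 / 2).
Proof.
rewrite /pp /normal_pdf oner_eq0 /normal_fun subr0 expr1n.
done.
Qed.
Lemma pp_gt0 t : 0 < pp t.
Proof. by rewrite ppE mulr_gt0 ?expR_gt0 // normal_peak_gt0 ?oner_eq0. Qed.

Lemma lnppE : (fun t => ln (pp t)) = (fun t => ln (normal_peak (1:R)) + (- t ^+ 2 / 2)).
Proof.
apply/funext => t; rewrite ppE lnM ?expRK //.
  by rewrite posrE normal_peak_gt0 ?oner_eq0.
by rewrite posrE expR_gt0.
Qed.

Lemma der_lnp (x : R) : is_derive x 1 (fun t => ln (pp t)) (- x).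
Proof.
rewrite lnppE.
have -> : (fun t : R => ln (normal_peak (1:R)) + (- t ^+ 2 / 2)) =
   cst (ln (normal_peak (1:R))) + (- 2^-1) \*: (@id R ^+ 2).
  apply/funext => t /=. rewrite !fctE /=. 
  change (- 2^-1 *: t ^+ 2) with (- 2^-1 * t ^+ 2). ring.
have H := is_deriveD (is_derive_cst (ln (normal_peak (1:R))) x 1) (is_deriveZ (- 2^-1) (is_deriveX 2 (is_derive_id x 1))).
apply: is_derive_eq H _.
rewrite add0r; change (- 2^-1 * ((2 * x ^+ 1) * 1) = - x). by rewrite mulr1 expr1 mulrA mulNr mulVf ?pnatr_eq0 // mulN1r.
Qed.

Lemma cont_of_der (f f' : R -> R) : (forall x : R, is_derive x 1 f (f' x)) -> continuous f.
Proof.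
move=> H x; apply/differentiable_continuous/derivable1_diffP.
by have [] := H x.
Qed.

Lemma derive1_of (f f' : R -> R) : (forall x : R, is_derive x 1 f (f' x)) -> derive1 f = f'.
Proof. by move=> H; apply/funext => x; rewrite derive1E derive_val. Qed.

Lemma der_sinK (s K x : R) :
  is_derive x 1 (fun t => s * sin (K * t)) (s * (cos (K * x) * K)).
Proof.
have -> : (fun t => s * sin (K * t)) = s \*: (sin \o (K \*: id)).
  by apply/funext => t.
have H1 : is_derive x 1 (K \*: (@id R)) (K *: 1) := is_deriveZ K (is_derive_id x 1).
have H2 := is_derive1_comp (is_derive_sin ((K \*: (@id R)) x)) H1.
apply: is_derive_eq (is_deriveZ s H2) _.
change (s * (cos (K * x) * (K * 1)) = s * (cos (K * x) * K)); by rewrite mulr1.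
Qed.

Lemma der_cosK (s K x : R) :
  is_derive x 1 (fun t => s * (cos (K * t) * K)) (s * (- sin (K * x) * K * K)).
Proof.
have -> : (fun t => s * (cos (K * t) * K)) = (s * K) \*: (cos \o (K \*: id)).
  apply/funext => t /=; change (s * (cos (K * t) * K) = (s * K) * cos (K * t)); ring.
have H1 : is_derive x 1 (K \*: (@id R)) (K *: 1) := is_deriveZ K (is_derive_id x 1).
have H2 := is_derive1_comp (is_derive_cos ((K \*: (@id R)) x)) H1.
apply: is_derive_eq (is_deriveZ (s * K) H2) _.
change ((s * K) * (- sin (K * x) * (K * 1)) = s * (- sin (K * x) * K * K)).
by rewrite mulr1; ring.
Qed.

Local Notation mu := (@lebesgue_measure R).

Lemma ratio_alg (a b c d k : R) : 0 <= k -> 0 < b -> 0 < d -> 0 <= c ->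
  a <= k * c -> d <= k * b -> a / b <= k ^+ 2 * (c / d).
Proof.
move=> k0 b0 d0 c0 ac db.
apply: (@le_trans _ _ (k * c / b)); first by rewrite ler_wpM2r // invr_ge0 ltW.
have -> : k ^+ 2 * (c / d) = (k * c / b) * ((k * b) / d).
  by field; rewrite ?gt_eqF.
rewrite -[X in X <= _]mulr1 ler_wpM2l //; first by rewrite !mulr_ge0 // invr_ge0 ltW.
by rewrite ler_pdivlMr // mul1r.
Qed.

Lemma post_ratio (f g : R -> R) (k : R) : 0 <= k ->
  (forall x, 0 <= f x) -> (forall x, 0 <= g x) ->
  measurable_fun setT f -> measurable_fun setT g ->
  (forall x, f x <= k * g x) -> (forall x, g x <= k * f x) ->
  (0 < \int[mu]_x (f x)%:E)%E -> (\int[mu]_x (f x)%:E < +oo)%E ->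
  (0 < \int[mu]_x (g x)%:E)%E -> (\int[mu]_x (g x)%:E < +oo)%E ->
  forall S : set R, measurable S ->
  fine (\int[mu]_(x in S) (f x)%:E)%E / fine (\int[mu]_x (f x)%:E)%E <=
  k ^+ 2 * (fine (\int[mu]_(x in S) (g x)%:E)%E / fine (\int[mu]_x (g x)%:E)%E).
Proof.
move=> k0 f0 g0 mf mg fg gf If0 Ifoo Ig0 Igoo S mS.
have sub (h : R -> R) : (forall x, 0 <= h x) -> measurable_fun setT h ->
    (0 <= \int[mu]_(x in S) (h x)%:E)%E /\
    (\int[mu]_(x in S) (h x)%:E <= \int[mu]_x (h x)%:E)%E.
  move=> h0 mh; split.
    by apply: integral_ge0 => x _; rewrite lee_fin.
  apply: ge0_subset_integral => //; first exact/measurable_EFinP.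
  by move=> x _; rewrite lee_fin.
have [fS0 fSle] := sub f f0 mf.
have [gS0 gSle] := sub g g0 mg.
have finf : (\int[mu]_x (f x)%:E)%E \is a fin_num by rewrite ge0_fin_numE ?ltW.
have fing : (\int[mu]_x (g x)%:E)%E \is a fin_num by rewrite ge0_fin_numE ?ltW.
have finfS : (\int[mu]_(x in S) (f x)%:E)%E \is a fin_num.
  by rewrite ge0_fin_numE // (le_lt_trans fSle).
have fingS : (\int[mu]_(x in S) (g x)%:E)%E \is a fin_num.
  by rewrite ge0_fin_numE // (le_lt_trans gSle).
have HS : (\int[mu]_(x in S) (f x)%:E <= k%:E * \int[mu]_(x in S) (g x)%:E)%E.
  rewrite -ge0_integralZl_EFin //; try (by move=> x _; rewrite lee_fin);
    try (by apply/measurable_funTS/measurable_EFinP).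
  apply: ge0_le_integral => //.
  - by move=> x _; rewrite lee_fin.
  - by apply/measurable_funTS/measurable_EFinP.
  - apply: measurable_funTS; apply/measurable_EFinP.
    by apply: measurable_funM => //; exact: measurable_cst.
  - by move=> x _; rewrite lee_fin.
have HT : (\int[mu]_x (g x)%:E <= k%:E * \int[mu]_x (f x)%:E)%E.
  rewrite -ge0_integralZl_EFin //; try (by move=> x _; rewrite lee_fin);
    try (by apply/measurable_EFinP).
  apply: ge0_le_integral => //.
  - by move=> x _; rewrite lee_fin.
  - exact/measurable_EFinP.
  - by apply/measurable_EFinP; apply: measurable_funM => //; exact: measurable_cst.
  - by move=> x _; rewrite lee_fin.
have kfin : k%:E \is a fin_num by [].
have HS' := fine_le finfS (fin_numM kfin fingS) HS.
have HT' := fine_le fing (fin_numM kfin finf) HT.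
rewrite fineM // in HS'.
rewrite fineM // in HT'.
have Zf0 : 0 < fine (\int[mu]_x (f x)%:E)%E by rewrite fine_gt0 // If0 Ifoo.
have Zg0 : 0 < fine (\int[mu]_x (g x)%:E)%E by rewrite fine_gt0 // Ig0 Igoo.
exact: ratio_alg (fine_ge0 gS0) HS' HT'.
Qed.

Lemma npdfE (m x : R) : normal_pdf m 1 x = normal_peak (1:R) * expR (- (x - m) ^+ 2 / 2).
Proof. by rewrite /normal_pdf oner_eq0 /normal_fun expr1n. Qed.

Lemma normal_tail (m : R) (A : set R) : measurable A ->
  (forall x, A x -> m * x <= 0) ->
  (normal_prob m 1 A <= (expR (- m ^+ 2 / 2))%:E)%E.
Proof.
move=> mA Am.
rewrite /normal_prob.
apply: (@le_trans _ _ (\int[mu]_(x in A) ((expR (- m ^+ 2 / 2))%:E * (normal_pdf 0 1 x)%:E))%E).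
  apply: ge0_le_integral => //.
  - by move=> x _; rewrite lee_fin normal_pdf_ge0.
  - by apply/measurable_funTS/measurable_EFinP; exact: measurable_normal_pdf.
  - apply/measurable_funTS/measurable_EFinP; apply: measurable_funM => //.
    exact: measurable_normal_pdf.
  - move=> x Ax; rewrite lee_fin !npdfE mulrCA ler_wpM2l ?normal_peak_ge0 //.
    rewrite -expRD ler_expR subr0.
    have := Am x Ax; move=> h.
    rewrite -mulrDl ler_pM2r ?invr_gt0 //.
    rewrite lerNl opprD !opprK.
    have -> : (x - m) ^+ 2 = m ^+ 2 + x ^+ 2 - 2 * (m * x) by ring.
    lra.
rewrite ge0_integralZl //; try (by move=> x _; rewrite lee_fin normal_pdf_ge0);
  try (by apply/measurable_funTS/measurable_EFinP; exact: measurable_normal_pdf);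
  try (by rewrite lee_fin expR_ge0).
rewrite -[X in (_ <= X)%E]mule1 lee_wpmul2l // ?lee_fin ?expR_ge0 //.
rewrite -(integral_normal_pdf 0 1).
apply: ge0_subset_integral => //.
- by apply/measurable_EFinP; exact: measurable_normal_pdf.
- by move=> x _; rewrite lee_fin normal_pdf_ge0.
Qed.
End S.

Section S2.
Context {R : realType}.
Local Notation mu := (@lebesgue_measure R).

Lemma int_bounds (f : R -> R) (k1 k2 : R) : 0 < k1 ->
  (forall x, k1 * pp x <= f x <= k2 * pp x) -> measurable_fun setT f ->
  (0 < \int[mu]_x (f x)%:E)%E /\ (\int[mu]_x (f x)%:E < +oo)%E.
Proof.
move=> k10 hf mf.
have k20 : 0 <= k2.
  have := hf 0 => /andP[h1 h2].
  have hp := @pp_gt0 R 0.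
  have : k1 * pp 0 <= k2 * pp 0 := le_trans h1 h2.
  rewrite ler_pM2r // => /(le_trans (ltW k10)); exact.
have f0 x : 0 <= f x.
  have := hf x => /andP[h1 _]; apply: le_trans h1.
  by rewrite mulr_ge0 ?(ltW k10) // ltW // pp_gt0.
have ppint : (\int[mu]_x (pp x)%:E = 1)%E by exact: integral_normal_pdf.
have mpp : measurable_fun setT (EFin \o (@pp R)).
  by apply/measurable_EFinP; exact: measurable_normal_pdf.
split.
  apply: (@lt_le_trans _ _ (\int[mu]_x (k1%:E * (pp x)%:E))%E); last first.
    apply: ge0_le_integral => //.
    - by move=> x _; rewrite lee_fin mulr_ge0 ?(ltW k10) // ltW // pp_gt0.
    - by apply/measurable_EFinP; apply: measurable_funM => //; exact: measurable_normal_pdf.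
    - exact/measurable_EFinP.
    - by move=> x _; rewrite lee_fin; have /andP[] := hf x.
  rewrite ge0_integralZl //; try (by move=> x _; rewrite lee_fin ltW // pp_gt0);
    try (by rewrite lee_fin ltW).
  by rewrite ppint mule1 lte_fin.
apply: (@le_lt_trans _ _ (\int[mu]_x (k2%:E * (pp x)%:E))%E).
  apply: ge0_le_integral => //.
  - by move=> x _; rewrite lee_fin.
  - exact/measurable_EFinP.
  - by apply/measurable_EFinP; apply: measurable_funM => //; exact: measurable_normal_pdf.
  - by move=> x _; rewrite lee_fin; have /andP[] := hf x.
rewrite ge0_integralZl //; try (by move=> x _; rewrite lee_fin ltW // pp_gt0);
  try (by rewrite lee_fin).
by rewrite ppint mule1 ltry.
Qed.

Lemma nprob_fin (m : R) (A : set R) : measurable A ->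
  (normal_prob m 1 A = (fine (normal_prob m 1 A))%:E) /\
  0 <= fine (normal_prob m 1 A) <= 1.
Proof.
move=> mA.
have h0 : (0 <= normal_prob m 1 A)%E by exact: measure_ge0.
have h1 : (normal_prob m 1 A <= 1)%E by exact: probability_le1.
have fn : normal_prob m 1 A \is a fin_num.
  by rewrite ge0_fin_numE // (le_lt_trans h1) // ltry.
split; first by rewrite fineK.
by rewrite fine_ge0 //= -lee_fin fineK.
Qed.

End S2.

Theorem theorem1 (R : realType) (delta eps eps' : R) :
  0 < delta < 2^-1 -> 0 < eps -> 0 < eps' ->
  exists (Y : Type) (n : nat) (p : R -> R) (l : Y -> R -> R),
    [/\ bayes_problem n p l,
        dp (@posterior_prob R Y n p l) eps delta &
        exists (eta : nat -> R) (theta0 : R) (T : nat),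
          (forall j, 0 < eta j) /\
          forall eps'' : R, eps'' < eps' ->
            ~ dp (@sgld_prob R Y n p l eta theta0 T) eps'' delta].
Proof.
move=> /andP[d0 d1] e0 e'0.
have d1' : delta < 1 by apply: (lt_trans d1); rewrite invf_lt1 // ltr1n.
set c := eps / 4.
have c0 : 0 < c by rewrite divr_gt0.
set E := expR eps'.
have E0 : 0 < E := expR_gt0 _.
set q := (1 - delta) / (2 * (1 + E)).
have qE : q * (2 * (1 + E)) = 1 - delta by rewrite /q divfK // gt_eqF //; lra.
have q0 : 0 < q by rewrite /q divr_gt0 //; lra.
have q1 : q < 1 by rewrite /q ltr_pdivrMr //; lra.
set a := 1 - 2 * ln q.
have lnq : ln q <= 0 by rewrite ln_le0 // ltW.
have a1 : 1 <= a by rewrite /a; lra.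
set K := 2 * a / c.
pose sg := fun y : bool => if y then c else - c.
pose l := fun (y : bool) (t : R) => expR (sg y * sin (K * t)).
have sgb y t : - c <= sg y * sin (K * t) <= c.
  have := sin_max (K * t); rewrite ler_norml => /andP[h1 h2].
  by case: y; rewrite /sg; apply/andP; split; nra.
have lnl y : (fun x => ln (l y x)) = (fun x => sg y * sin (K * x)).
  by apply/funext => x; rewrite /l expRK.
have dl y : derive1 (fun x => ln (l y x)) = (fun x => sg y * (cos (K * x) * K)).
  by rewrite lnl; apply: derive1_of => x; exact: der_sinK.
have dp' : derive1 (fun x => ln (@pp R x)) = (fun x => - x).
  by apply: derive1_of => x; exact: der_lnp.
have ml y : measurable_fun setT (l y).
  apply: measurableT_comp; first exact: measurable_expR.
  apply: continuous_measurable_fun.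
  by apply: (@cont_of_der R _ (fun x => sg y * (cos (K * x) * K))) => x; exact: der_sinK.
have pdE (D : 'I_1 -> bool) : post_dens pp l D = (fun t => pp t * l (D ord0) t).
  by apply/funext => t; rewrite /post_dens big_ord1.
have mpd (D : 'I_1 -> bool) : measurable_fun setT (post_dens pp l D).
  rewrite pdE; apply: measurable_funM => //; exact: measurable_normal_pdf.
have lb y t : expR (- c) <= l y t <= expR c.
  by have /andP[h1 h2] := sgb y t; rewrite /l !ler_expR h1 h2.
have intb (D : 'I_1 -> bool) :
    (0 < \int[lebesgue_measure]_x (post_dens pp l D x)%:E)%E /\
    (\int[lebesgue_measure]_x (post_dens pp l D x)%:E < +oo)%E.
  apply: (@int_bounds R _ (expR (- c)) (expR c)) => //; first exact: expR_gt0.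
  move=> x; rewrite pdE /= mulrC [_ * pp x]mulrC.
  have /andP[h1 h2] := lb (D ord0) x.
  by rewrite !ler_wpM2l // ltW // pp_gt0.
have pd0 (D : 'I_1 -> bool) x : 0 <= post_dens pp l D x.
  by rewrite pdE mulr_ge0 // ltW ?pp_gt0 ?expR_gt0.
have pdle (D D' : 'I_1 -> bool) x : post_dens pp l D x <= expR (2 * c) * post_dens pp l D' x.
  rewrite !pdE mulrCA ler_wpM2l ?(ltW (pp_gt0 _)) //.
  have /andP[_ h2] := lb (D ord0) x.
  have /andP[h3 _] := lb (D' ord0) x.
  apply: (le_trans h2); apply: (le_trans _ (ler_wpM2l (ltW (expR_gt0 _)) h3)).
  by rewrite -expRD; rewrite ler_expR; lra.
exists bool, 0%N, pp, l; split.
- split; first by split => [t|y t]; [exact: pp_gt0 | exact: expR_gt0].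
  split.
  + split; first by move=> t; have [] := der_lnp t.
    by rewrite dp'; apply: (@cont_of_der R _ (fun _ => - 1)) => x; exact: is_deriveNid.
  + move=> y; split; first by move=> t; rewrite lnl; have [] := der_sinK (sg y) K t.
    rewrite dl; apply: (@cont_of_der R _ (fun x => sg y * (- sin (K * x) * K * K))) => x.
    exact: der_cosK.
  + exact: integral_normal_pdf.
  + exact: intb.
- move=> D D' _ S mS.
  rewrite /posterior_prob.
  have [i1 i2] := intb D.
  have [i3 i4] := intb D'.
  have key := @post_ratio R (post_dens pp l D) (post_dens pp l D') (expR (2 * c))
    (ltW (expR_gt0 _)) (pd0 D) (pd0 D') (mpd D) (mpd D') (pdle D D') (pdle D' D) i1 i2 i3 i4 S mS.
  have -> : expR eps = expR (2 * c) ^+ 2.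
    by rewrite -expRM_natr; congr expR; rewrite /c; field.
  apply: (le_trans key); rewrite lerDl; exact: ltW.
- exists (fun _ => 1), 0, 1%N; split => [j|]; first exact: ltr01.
  move=> e'' he'' Hdp.
  pose S : set R := `[0, +oo[%classic.
  have mS : measurable S by exact: measurable_itv.
  have nb : neighbors (fun _ : 'I_1 => true) (fun _ : 'I_1 => false).
    by exists ord0 => j; rewrite ord1 eqxx.
  have := Hdp _ _ nb S mS.
  have sgE y : sgld_prob pp l (fun _ => 1) 0 1 (fun _ : 'I_1 => y) S =
      fine (normal_prob (sg y * K / 2) 1 S).
    rewrite /sgld_prob /=.
    rewrite (big_pred1 (1%g : 'S_1)); last first.
      by move=> s; apply/esym/eqP/permP => i; rewrite !ord1.
    rewrite integral_indic //= setIT sqrtr1.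
    have -> : (1`!%:R : R) = 1 by [].
    rewrite divr1; congr (fine (normal_prob _ _ _)).
    rewrite /sgld_drift dp' dl /= mulr0 cos0.
    ring.
  rewrite !sgE.
  have ha : sg true * K / 2 = a by rewrite /sg /K; field; rewrite gt_eqF.
  have hb : sg false * K / 2 = - a by rewrite /sg /K; field; rewrite gt_eqF.
  rewrite ha hb.
  set qe := expR (- a ^+ 2 / 2).
  have qeq : qe <= q.
    have -> : q = expR (ln q) by rewrite lnK // posrE.
    rewrite ler_expR /a; nra.
  have [eT /andP[T0 T1]] := nprob_fin a S mS.
  have [eF /andP[F0 F1]] := nprob_fin (- a) S mS.
  have tF : (normal_prob (- a) 1 S <= qe%:E)%E.
    rewrite /qe -(sqrrN a); apply: normal_tail => // x.
    rewrite /S /= in_itv /= andbT => hx; nra.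
  have tT : (normal_prob a 1 (~` S) <= qe%:E)%E.
    apply: normal_tail => //; first exact: measurableC.
    move=> x; rewrite /S /= in_itv /= andbT => /negP; rewrite -ltNge => hx; nra.
  have tT' : (1 - normal_prob a 1 S <= qe%:E)%E.
    by move: tT; rewrite probability_setC //; exact.
  rewrite eT -EFinB lee_fin in tT'.
  rewrite eF lee_fin in tF.
  move=> H.
  have hE : expR e'' <= E by rewrite ler_expR ltW.
  have h1 : expR e'' * fine (normal_prob (- a) 1 S) <= E * q.
    apply: ler_pM; [exact: ltW (expR_gt0 _)| exact: F0 | exact: hE | exact: le_trans tF qeq].
  have qE' : q + E * q = (1 - delta) / 2.
    by rewrite -qE; field.
  lra.
Qed.
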